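(* Let $X\subset\mathbb{C}^n$ be an unbounded complex algebraic subset whose tangent cone at infinity $C_\infty(X)$ is a complex linear subspace, and let $\pi\colon\mathbb{C}^n\to C_\infty(X)$ be the orthogonal projection. If $\gamma\colon(\varepsilon,+\infty)\to X$ is an arc with $\lim_{t\to+\infty}\|\gamma(t)\|=+\infty$ and $\pi(\gamma(t))=tv+o_\infty(t)$ for some $v\in C_\infty(X)$, then $\gamma(t)=tv+o_\infty(t)$.
   Context: For an unbounded $X\subset\mathbb{R}^m$, a set $E$ is a tangent cone of $X$ at infinity if there exist positive reals $t_j\to+\infty$ and $D\subset\mathbb{S}^{m-1}$ with $D$ the Hausdorff limit of $\frac{1}{t_j}(X\cap\{\|x\|=t_j\})$ and $E=\{tv:v\in D,t\ge0\}$; for algebraic sets it is unique and denoted $C_\infty(X)$. The notation $g(t)=o_\infty(t)$ means $\lim_{t\to+\infty}g(t)/t=0$. *)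

(* Defs.v *)
From mathcomp Require Import all_boot.
From Stdlib Require Import Reals.
Set Implicit Arguments.
Unset Strict Implicit.

Local Open Scope R_scope.

Definition C := (R * R)%type.
Definition C0 : C := (0, 0).
Definition Cadd (a b : C) : C := (fst a + fst b, snd a + snd b).
Definition Cmul (a b : C) : C :=
  (fst a * fst b - snd a * snd b, fst a * snd b + snd a * fst b).

Definition Cn (n : nat) := 'I_n -> C.

Definition vzero n : Cn n := fun _ => C0.
Definition vadd n (x y : Cn n) : Cn n := fun i => Cadd (x i) (y i).
Definition vsub n (x y : Cn n) : Cn n :=
  fun i => (fst (x i) - fst (y i), snd (x i) - snd (y i)).
Definition cscal n (a : C) (x : Cn n) : Cn n := fun i => Cmul a (x i).
Definition rscal n (t : R) (x : Cn n) : Cn n :=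
  fun i => (t * fst (x i), t * snd (x i)).

(* Real part of the Hermitian inner product = Euclidean inner product on R^{2n}. *)
Definition rinner n (x y : Cn n) : R :=
  \big[Rplus/0]_(i < n) (fst (x i) * fst (y i) + snd (x i) * snd (y i)).
Definition vnorm n (x : Cn n) : R := sqrt (rinner x x).

Inductive cpoly : Type :=
| PConst : C -> cpoly
| PVar : nat -> cpoly
| PAdd : cpoly -> cpoly -> cpoly
| PMul : cpoly -> cpoly -> cpoly.

(* Evaluation at z in C^n; variables with index >= n evaluate to 0. *)
Fixpoint ceval n (z : Cn n) (p : cpoly) : C :=
  match p with
  | PConst c => c
  | PVar k => match insub k with Some i => z i | None => C0 end
  | PAdd p q => Cadd (ceval z p) (ceval z q)
  | PMul p q => Cmul (ceval z p) (ceval z q)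
  end.

Definition is_complex_algebraic n (X : Cn n -> Prop) : Prop :=
  exists ps : list cpoly,
    forall z, X z <-> List.Forall (fun p => ceval z p = C0) ps.

Definition unbounded n (X : Cn n -> Prop) : Prop :=
  forall M : R, exists z, X z /\ vnorm z > M.

Definition is_complex_subspace n (L : Cn n -> Prop) : Prop :=
  L (@vzero n) /\
  (forall x y, L x -> L y -> L (vadd x y)) /\
  (forall a x, L x -> L (cscal a x)).

Definition closed_set n (D : Cn n -> Prop) : Prop :=
  forall x, (forall eps, eps > 0 -> exists d, D d /\ vnorm (vsub x d) < eps) -> D x.

Definition hausdorff_limit n (A : nat -> Cn n -> Prop) (D : Cn n -> Prop) : Prop :=
  forall eps, eps > 0 -> exists J : nat, forall j : nat, (J <= j)%nat ->
    (forall a, A j a -> exists d, D d /\ vnorm (vsub a d) < eps) /\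
    (forall d, D d -> exists a, A j a /\ vnorm (vsub a d) < eps).

(* E is a tangent cone of X at infinity (as in the paper: there are t_j -> +oo
   and a (closed) D in the unit sphere, Hausdorff limit of
   (1/t_j)(X ∩ {|x| = t_j}), with E the cone over D). *)
Definition is_tangent_cone_at_infinity n (X E : Cn n -> Prop) : Prop :=
  exists (t : nat -> R) (D : Cn n -> Prop),
    (forall j, t j > 0) /\
    (forall M, exists J : nat, forall j : nat, (J <= j)%nat -> t j > M) /\
    (forall d, D d -> vnorm d = 1) /\
    closed_set D /\
    hausdorff_limit
      (fun j y => exists x, X x /\ vnorm x = t j /\ y = rscal (/ t j) x) D /\
    (forall x, E x <-> exists s v, s >= 0 /\ D v /\ x = rscal s v).

Definition tangent_cone_at_infinity_is n (X E : Cn n -> Prop) : Prop :=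
  is_tangent_cone_at_infinity X E /\
  (forall E', is_tangent_cone_at_infinity X E' -> forall x, E' x <-> E x).

Definition is_orth_projection n (L : Cn n -> Prop) (pi : Cn n -> Cn n) : Prop :=
  forall z, L (pi z) /\ forall w, L w -> rinner (vsub z (pi z)) w = 0.

Definition asymp_linear n (f : R -> Cn n) (v : Cn n) : Prop :=
  forall eps, eps > 0 -> exists T, forall t, t > T ->
    vnorm (vsub (f t) (rscal t v)) <= eps * t.

(* Main.v *)
From HB Require Import structures.
From Stdlib Require Import ZArith Lia.
Require Import Defs.
From mathcomp Require Import all_boot.
From Stdlib Require Import Reals Lra Psatz ClassicalEpsilon FunctionalExtensionality Classical.
Local Open Scope R_scope.
Set Implicit Arguments.
Set Warnings "-notation-overridden -redundant-canonical-projection".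

Lemma Radd_assoc : associative Rplus. Proof. move=> *; rewrite Rplus_assoc. done. Qed.
HB.instance Definition _ := Monoid.isComLaw.Build R 0%R Rplus Radd_assoc Rplus_comm Rplus_0_l.

Lemma big_const_R m c : \big[Rplus/0]_(i < m) c = INR m * c.
Proof.
elim: m => [|k IH]; first by rewrite big_ord0 /=; lra.
rewrite big_ord_recr IH S_INR; change (INR k * c + c = (INR k + 1) * c); ring.
Qed.

Section Vec.
Variable n : nat.
Implicit Types x y z w : Cn n.

Lemma big_scal (a : R) (F : 'I_n -> R) :
  \big[Rplus/0]_(i < n) (a * F i) = a * \big[Rplus/0]_(i < n) F i.
Proof.
apply: (big_rec2 (fun u v => u = a * v)); first by ring.
by move=> i u v _ ->; ring.
Qed.

Lemma big_ge0 (F : 'I_n -> R) : (forall i, 0 <= F i) -> 0 <= \big[Rplus/0]_(i < n) F i.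
Proof.
move=> H; apply: (big_rec (fun u => 0 <= u)); first lra.
move=> i u _ Hu; have := H i; lra.
Qed.

Lemma big_le (F G : 'I_n -> R) : (forall i, F i <= G i) ->
  \big[Rplus/0]_(i < n) F i <= \big[Rplus/0]_(i < n) G i.
Proof.
move=> H; apply: (big_rec2 (fun u v => u <= v)); first lra.
move=> i u v _ Hu; have := H i; lra.
Qed.

Lemma big_const_le (F : 'I_n -> R) c : (forall i, F i <= c) ->
  \big[Rplus/0]_(i < n) F i <= INR n * c.
Proof.
move=> H; apply: (Rle_trans _ _ _ (@big_le F (fun _ => c) H)).
by rewrite big_const_R; lra.
Qed.

Lemma rinner_ge0 x : 0 <= rinner x x.
Proof. apply: big_ge0 => i; nra. Qed.

Lemma rinner_sym x y : rinner x y = rinner y x.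
Proof. apply: eq_bigr => i _; ring. Qed.

Lemma rinner_addl x y z : rinner (vadd x y) z = rinner x z + rinner y z.
Proof.
rewrite /rinner -big_split /=; apply: eq_bigr => i _; rewrite /vadd /Cadd /=; ring.
Qed.

Lemma rinner_scall a x y : rinner (rscal a x) y = a * rinner x y.
Proof.
rewrite /rinner -big_scal; apply: eq_bigr => i _; rewrite /rscal /=; ring.
Qed.

Lemma rinner_addr x y z : rinner z (vadd x y) = rinner z x + rinner z y.
Proof. by rewrite rinner_sym rinner_addl (rinner_sym x) (rinner_sym y). Qed.

Lemma rinner_scalr a x y : rinner y (rscal a x) = a * rinner y x.
Proof. by rewrite rinner_sym rinner_scall rinner_sym. Qed.

Lemma vnorm_ge0 x : 0 <= vnorm x.
Proof. apply: sqrt_pos. Qed.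

Lemma vnorm_sq x : vnorm x * vnorm x = rinner x x.
Proof. apply: sqrt_sqrt; apply: rinner_ge0. Qed.

Lemma disc_le a b c : 0 <= a -> 0 <= c -> (forall l, 0 <= a + 2 * l * b + l * l * c) ->
  b * b <= a * c.
Proof.
move=> Ha Hc H.
case: (Req_dec c 0) => Hc0.
  case: (Req_dec b 0) => Hb0; first (subst; nra).
  have := H (-(a + 1) / (2 * b)).
  have -> : a + 2 * (- (a + 1) / (2 * b)) * b + - (a + 1) / (2 * b) * (- (a + 1) / (2 * b)) * c
     = -1 by subst; field.
  lra.
have := H (- b / c).
have -> : a + 2 * (- b / c) * b + - b / c * (- b / c) * c = a - b * b / c by field.
move=> H1.
have : b * b / c <= a by lra.
move=> H2. have Hc' : 0 < c by lra.
have : b * b / c * c <= a * c by apply: Rmult_le_compat_r; lra.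
have -> : b * b / c * c = b * b by field.
done.
Qed.

Lemma cauchy_schwarz x y : Rabs (rinner x y) <= vnorm x * vnorm y.
Proof.
have H : forall l, 0 <= rinner x x + 2 * l * rinner x y + l * l * rinner y y.
  move=> l; have := rinner_ge0 (vadd x (rscal l y)).
  rewrite !rinner_addl !rinner_addr !rinner_scall !rinner_scalr (rinner_sym y x).
  lra.
have := @disc_le _ _ _ (rinner_ge0 x) (rinner_ge0 y) H.
rewrite -!vnorm_sq => Hd.
have h1 := vnorm_ge0 x; have h2 := vnorm_ge0 y.
apply: Rsqr_incr_0_var; last nra.
rewrite /Rsqr; have := Rabs_mult (rinner x y) (rinner x y).
rewrite -Rabs_mult Rabs_right; last nra.
move=> _; nra.
Qed.

Lemma vnorm_add x y : vnorm (vadd x y) <= vnorm x + vnorm y.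
Proof.
have h1 := vnorm_ge0 x; have h2 := vnorm_ge0 y.
apply: Rsqr_incr_0_var; last nra.
rewrite /Rsqr vnorm_sq rinner_addl !rinner_addr -!vnorm_sq (rinner_sym y x).
have := cauchy_schwarz x y; have := Rle_abs (rinner x y). nra.
Qed.

Lemma vsub_split x y z : vsub x z = vadd (vsub x y) (vsub y z).
Proof.
apply: functional_extensionality => i; rewrite /vsub /vadd /Cadd /=.
f_equal; ring.
Qed.

Lemma vnorm_tri x y z : vnorm (vsub x z) <= vnorm (vsub x y) + vnorm (vsub y z).
Proof. rewrite (vsub_split x y z); apply: vnorm_add. Qed.

Lemma vnorm_subC x y : vnorm (vsub x y) = vnorm (vsub y x).
Proof. rewrite /vnorm; f_equal; apply: eq_bigr => i _; rewrite /vsub /=; ring. Qed.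

Lemma vnorm_rscal a x : vnorm (rscal a x) = Rabs a * vnorm x.
Proof.
rewrite /vnorm rinner_scall rinner_scalr -Rmult_assoc sqrt_mult; last first.
- apply: rinner_ge0.
- nra.
- by rewrite -sqrt_Rsqr_abs.
Qed.
End Vec.

Section Vec2.
Variable n : nat.
Implicit Types x y z w : Cn n.

Lemma coord_le x i : Rabs (fst (x i)) <= vnorm x /\ Rabs (snd (x i)) <= vnorm x.
Proof.
have H : fst (x i) * fst (x i) + snd (x i) * snd (x i) <= rinner x x.
  rewrite /rinner (bigD1 i) //=.
  have : 0 <= \big[Rplus/0]_(j < n | j != i) (fst (x j) * fst (x j) + snd (x j) * snd (x j)).
    apply: (big_rec (fun u => 0 <= u)); first lra.
    move=> j u _ Hu; nra.
  move=> H0. change (fst (x i) * fst (x i) + snd (x i) * snd (x i) <=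
    fst (x i) * fst (x i) + snd (x i) * snd (x i) +
    \big[Rplus/0]_(j < n | j != i) (fst (x j) * fst (x j) + snd (x j) * snd (x j))). lra.
rewrite /vnorm; split.
- rewrite -sqrt_Rsqr_abs; apply: sqrt_le_1_alt; rewrite /Rsqr; nra.
- rewrite -sqrt_Rsqr_abs; apply: sqrt_le_1_alt; rewrite /Rsqr; nra.
Qed.

Lemma sq_le a d : Rabs a <= d -> a * a <= d * d.
Proof.
move=> H; have h := Rabs_pos a.
rewrite (_ : a * a = Rabs a * Rabs a); first nra.
rewrite -Rabs_mult Rabs_right; nra.
Qed.

Lemma INR_01 m : INR m = 0 \/ 1 <= INR m.
Proof. case: m => [|k]; [by left | right; rewrite S_INR; have := pos_INR k; lra]. Qed.

Lemma vnorm_coord_bound x d : 0 <= d ->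
  (forall i, Rabs (fst (x i)) <= d /\ Rabs (snd (x i)) <= d) ->
  vnorm x <= 2 * INR n * d.
Proof.
move=> Hd H.
have H1 : rinner x x <= INR n * (2 * (d * d)).
  apply: big_const_le => i; have [h1 h2] := H i.
  have := @sq_le _ _ h1; have := @sq_le _ _ h2; lra.
have H2 : INR n * (2 * (d * d)) <= (2 * INR n * d) * (2 * INR n * d).
  have := pos_INR n; case: (INR_01 n) => h h'; nra.
rewrite /vnorm -(sqrt_square (2 * INR n * d)); last by have := pos_INR n; nra.
apply: sqrt_le_1_alt; lra.
Qed.

Lemma L_rscal L a x : is_complex_subspace L -> L x -> L (rscal a x).
Proof.
move=> [_ [_ HL]] Hx.
have -> : rscal a x = cscal (a, 0) x.
  apply: functional_extensionality => i; rewrite /rscal /cscal /Cmul /=; f_equal; ring.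
by apply: HL.
Qed.

Lemma L_vsub L x y : is_complex_subspace L -> L x -> L y -> L (vsub x y).
Proof.
move=> HL Hx Hy.
have -> : vsub x y = vadd x (rscal (-1) y).
  apply: functional_extensionality => i; rewrite /vsub /vadd /rscal /Cadd /=; f_equal; ring.
case: (HL) => [_ [Hadd _]]; apply: Hadd => //; exact: L_rscal.
Qed.

Lemma proj_min L pi z w : is_complex_subspace L -> is_orth_projection L pi -> L w ->
  vnorm (vsub z (pi z)) <= vnorm (vsub z w).
Proof.
move=> HL Hpi Hw.
have [Hp Horth] := Hpi z.
have He : L (vsub (pi z) w) by apply: L_vsub.
have H0 := Horth _ He.
rewrite (vsub_split z (pi z) w) /vnorm; apply: sqrt_le_1_alt.
rewrite rinner_addl !rinner_addr (rinner_sym (vsub (pi z) w) (vsub z (pi z))) H0.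
have := rinner_ge0 (vsub (pi z) w); lra.
Qed.
End Vec2.

Definition pb (P : Prop) : bool := if excluded_middle_informative P then true else false.
Lemma pbP (P : Prop) : pb P = true <-> P.
Proof. rewrite /pb; case: excluded_middle_informative => //; split => //. Qed.

Lemma abs_bt y d : Rabs y <= d -> - d <= y <= d.
Proof. move=> H; split; [have := Rle_abs (- y); rewrite Rabs_Ropp | have := Rle_abs y]; lra. Qed.

Arguments abs_bt {y d}.

Section Grid.
Variable n : nat.

Definition mk (k : nat) : nat := Nat.mul (Nat.add (Nat.mul 2 n) 1) (Nat.pow 2 k).
Definition Kk (k : nat) : nat := Nat.add (Nat.mul 2 (mk k)) 1.

Lemma mk_INR k : INR (mk k) = (2 * INR n + 1) * 2 ^ k.
Proof.
have h2 : INR 2 = 2 by simpl; ring.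
rewrite /mk mult_INR plus_INR mult_INR pow_INR h2; change (INR 1) with 1; ring.
Qed.

Lemma mk_pos k : 0 < INR (mk k).
Proof. rewrite mk_INR; have := pos_INR n; have := pow_lt 2 k; nra. Qed.

Definition rc k (y : R) : 'I_(Kk k).+1 := inord (Z.to_nat (up (INR (mk k) * (y + 1)))).

Lemma rc_eq k y z : Rabs y <= 1 -> Rabs z <= 1 -> rc k y = rc k z ->
  Rabs (y - z) <= / INR (mk k).
Proof.
move=> Hy Hz Heq.
have HM := mk_pos k.
set M := INR (mk k) in HM Heq *.
have Hrng : forall u, 0 <= u -> u <= 2 * M ->
   (0 < up u)%Z /\ leq (Z.to_nat (up u)).+1 (Kk k).+1.
  move=> u h1 h2; have [a1 a2] := archimed u.
  split; first by apply: lt_IZR; simpl; lra.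
  apply/leP.
  have : (up u <= Z.of_nat (Kk k))%Z.
    apply: le_IZR; rewrite -INR_IZR_INZ /Kk plus_INR mult_INR -/M /=; lra.
  lia.
have [y1 y2] := abs_bt Hy; have [z1 z2] := abs_bt Hz.
have [hy1 hy2] := Hrng (M * (y + 1)) ltac:(nra) ltac:(nra).
have [hz1 hz2] := Hrng (M * (z + 1)) ltac:(nra) ltac:(nra).
have Hup : up (M * (y + 1)) = up (M * (z + 1)).
  apply: Z2Nat.inj; try lia.
  have := congr1 (@nat_of_ord _) Heq; rewrite /rc !inordK //.
have [a1 a2] := archimed (M * (y + 1)); have [b1 b2] := archimed (M * (z + 1)).
rewrite Hup in a1 a2.
apply: Rabs_le.
have HiM : / M * M = 1 by field; lra.
have Hi : 0 < / M by apply: Rinv_0_lt_compat.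
split.
- have : M * (y - z) >= -1 by lra.
  move=> h; have : / M * (M * (y - z)) >= / M * -1 by apply: Rmult_ge_compat_l; lra.
  rewrite -Rmult_assoc HiM; lra.
- have : M * (y - z) <= 1 by lra.
  move=> h; have : / M * (M * (y - z)) <= / M * 1 by apply: Rmult_le_compat_l; lra.
  rewrite -Rmult_assoc HiM; lra.
Qed.

End Grid.

Section Trace.
Variable n : nat.

Definition G k := {ffun 'I_n -> 'I_(Kk n k).+1 * 'I_(Kk n k).+1}.
Definition rnd k (a : Cn n) : G k := [ffun i => (rc n k (fst (a i)), rc n k (snd (a i)))].
Definition tr k (A : Cn n -> Prop) : {set G k} := [set g | pb (exists a, A a /\ rnd k a = g)].

Lemma grid_small k : 2 * INR n * / INR (mk n k) < / 2 ^ k.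
Proof.
have HM := mk_pos n k.
have Hp := pow_lt 2 k ltac:(lra).
apply: (Rmult_lt_reg_r (INR (mk n k))) => //.
rewrite Rmult_assoc Rinv_l; last lra.
rewrite mk_INR; field_simplify; last lra.
lra.
Qed.

Lemma tr_close k (A B : Cn n -> Prop) :
  (forall a, A a -> vnorm a = 1) -> (forall b, B b -> vnorm b = 1) ->
  tr k A = tr k B -> forall a, A a -> exists b, B b /\ vnorm (vsub a b) < / 2 ^ k.
Proof.
move=> HA HB Htr a Ha.
have : rnd k a \in tr k B.
  rewrite -Htr inE; apply/pbP; by exists a.
rewrite inE => /pbP [b [Hb Hr]].
exists b; split => //.
apply: (Rle_lt_trans _ _ _ _ (grid_small k)).
have HM := mk_pos n k.
apply: vnorm_coord_bound; first by left; apply: Rinv_0_lt_compat.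
move=> i.
have := congr1 (fun f : G k => f i) Hr; rewrite !ffunE => -[h1 h2].
have [ca1 ca2] := coord_le a i; have [cb1 cb2] := coord_le b i.
rewrite (HA a Ha) in ca1 ca2; rewrite (HB b Hb) in cb1 cb2.
rewrite /vsub /=; split; apply: rc_eq => //; by rewrite ?h1 ?h2.
Qed.
End Trace.

Definition inf (P : nat -> Prop) := forall N, exists j, leq N j /\ P j.

Lemma pigeon (T : finType) (f : nat -> T) (P : nat -> Prop) :
  inf P -> exists c, inf (fun j => P j /\ f j = c).
Proof.
move=> HP; apply: NNPP => H.
have H1 : forall c, exists N, forall j, leq N j -> P j -> f j <> c.
  move=> c; apply: NNPP => H2; apply: H; exists c => N.
  apply: NNPP => H3; apply: H2; exists N => j Hj Pj Hf; apply: H3; by exists j.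
pose Nf c := epsilon (inhabits 0%nat) (fun N => forall j, leq N j -> P j -> f j <> c).
have HNf : forall c j, leq (Nf c) j -> P j -> f j <> c.
  move=> c; exact: (epsilon_spec (inhabits 0%nat) _ (H1 c)).
have [j [Hj Pj]] := HP (\max_(c : T) Nf c).
apply: (HNf (f j) j) => //.
apply: leq_trans Hj; exact: (leq_bigmax (f j)).
Qed.

Section Diag.
Variable n : nat.
Variable B : nat -> Cn n -> Prop.

Definition cpick k (P : nat -> Prop) : {set G n k} :=
  epsilon (inhabits set0) (fun c => inf (fun j => P j /\ tr k (B j) = c)).

Fixpoint Pk (k : nat) : nat -> Prop :=
  match k with
  | 0 => fun _ => True
  | S k' => fun j => Pk k' j /\ tr k' (B j) = cpick k' (Pk k')
  end.

Lemma Pk_inf k : inf (Pk k).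
Proof.
elim: k => [|k IH]; first by move=> N; exists N.
have H := epsilon_spec (inhabits (set0 : {set G n k}))
  (fun c => inf (fun j => Pk k j /\ tr k (B j) = c)) (@pigeon _ (fun j => tr k (B j)) _ IH).
exact: H.
Qed.

Lemma Pk_mono k d j : Pk (k + d) j -> Pk k j.
Proof.
elim: d => [|d IH]; first by rewrite addn0.
by rewrite addnS => -[H _]; apply: IH.
Qed.

Fixpoint sq (k : nat) : nat :=
  match k with
  | 0 => 0
  | S k' => epsilon (inhabits 0%nat) (fun j => leq (sq k').+1 j /\ Pk (S k') j)
  end.

Lemma sq_spec k : Pk k (sq k) /\ leq (sq k).+1 (sq k.+1).
Proof.
have H : forall k, leq (sq k).+1 (sq k.+1) /\ Pk k.+1 (sq k.+1).
  move=> k0; exact: (epsilon_spec (inhabits 0%nat) _ (Pk_inf k0.+1 (sq k0).+1)).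
split; last by case: (H k).
by case: k => [|k] //; case: (H k).
Qed.

Lemma sq_ge k : leq k (sq k).
Proof.
elim: k => [|k IH] //; have [_ h] := sq_spec k; exact: leq_ltn_trans IH h.
Qed.

Lemma sq_tr k k' : leq k k' -> tr k (B (sq k.+1)) = tr k (B (sq k'.+1)).
Proof.
move=> Hk.
have [[_ h1] _] := sq_spec k.+1.
have [h2 _] := sq_spec k'.+1.
have : Pk (k.+1 + (k' - k)) (sq k'.+1) by rewrite addSn subnKC.
move=> /Pk_mono [_ h3].
by rewrite h1 h3.
Qed.
End Diag.

Lemma pow2_ge k : INR k + 1 <= 2 ^ k.
Proof.
elim: k => [|k IH]; first by simpl; lra.
have h : 0 < 2 ^ k by apply: pow_lt; lra.
rewrite S_INR. rewrite [2 ^ _]/=. have := pos_INR k. lra.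
Qed.

Lemma r_pos k : 0 < / 2 ^ k.
Proof. apply: Rinv_0_lt_compat; apply: pow_lt; lra. Qed.

Lemma r_small e : 0 < e -> exists K, forall k, leq K k -> / 2 ^ k < e.
Proof.
move=> He; have [N [HN HN0]] := archimed_cor1 e He.
exists N => k /leP Hk.
have h1 := le_INR _ _ Hk; have h2 := pow2_ge k.
have hN : 0 < INR N by apply: lt_0_INR; lia.
apply: Rle_lt_trans HN.
apply: Rinv_le_contravar => //; lra.
Qed.

Lemma r_mono k k' : leq k k' -> / 2 ^ k' <= / 2 ^ k.
Proof.
move=> /leP Hk; apply: Rinv_le_contravar; first by apply: pow_lt; lra.
apply: Rle_pow => //; lra.
Qed.

Lemma eq_eps a b : (forall e, 0 < e -> Rabs (a - b) <= e) -> a = b.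
Proof.
move=> H; case: (Req_dec a b) => // Hne.
have Hp : 0 < Rabs (a - b) by apply: Rabs_pos_lt; lra.
have := H _ (ltac:(lra) : 0 < Rabs (a - b) / 2); lra.
Qed.

Section Lim.
Variable n : nat.
Implicit Types x y z w : Cn n.

Lemma vsub0 x : vsub x (@vzero n) = x.
Proof.
apply: functional_extensionality => i; rewrite /vsub /vzero /C0 /=.
case: (x i) => a b /=; f_equal; ring.
Qed.

Lemma norm_lip x y : Rabs (vnorm x - vnorm y) <= vnorm (vsub x y).
Proof.
have h1 := vnorm_tri x y (@vzero n); have h2 := vnorm_tri y x (@vzero n).
rewrite !vsub0 in h1 h2; rewrite vnorm_subC in h2.
apply: Rabs_le; lra.
Qed.

Lemma coord_diff x y i :
  Rabs (fst (x i) - fst (y i)) <= vnorm (vsub x y) /\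
  Rabs (snd (x i) - snd (y i)) <= vnorm (vsub x y).
Proof. exact: (coord_le (vsub x y) i). Qed.

Lemma cn_limit (u : nat -> Cn n) (rho : nat -> R) :
  (forall p q, vnorm (vsub (u p) (u (p + q)%nat)) <= rho p) ->
  (forall e, 0 < e -> exists P, forall p, leq P p -> rho p < e) ->
  exists d, forall p, vnorm (vsub (u p) d) <= rho p.
Proof.
move=> Hu Hr.
have Hc : forall p q, leq p q -> vnorm (vsub (u p) (u q)) <= rho p.
  move=> p q Hpq; have := Hu p (q - p)%nat; by rewrite subnKC.
have Hc2 : forall p q P, leq P p -> leq P q -> vnorm (vsub (u p) (u q)) <= 2 * rho P.
  move=> p q P HP HQ.
  have h1 := Hc P p HP; have h2 := Hc P q HQ.
  have := vnorm_tri (u p) (u P) (u q); rewrite vnorm_subC in h1; lra.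
have Cf : forall i, Cauchy_crit (fun p => fst (u p i)).
  move=> i e He; have [P HP] := Hr (e / 2) ltac:(lra); exists P => p q /leP hp /leP hq.
  rewrite /Rdist; have [h _] := coord_diff (u p) (u q) i.
  have := Hc2 p q P hp hq; have := HP P (leqnn P); lra.
have Cs : forall i, Cauchy_crit (fun p => snd (u p i)).
  move=> i e He; have [P HP] := Hr (e / 2) ltac:(lra); exists P => p q /leP hp /leP hq.
  rewrite /Rdist; have [_ h] := coord_diff (u p) (u q) i.
  have := Hc2 p q P hp hq; have := HP P (leqnn P); lra.
pose d : Cn n := fun i => (proj1_sig (R_complete _ (Cf i)), proj1_sig (R_complete _ (Cs i))).
exists d => p.
apply: Rle_plus_epsilon => eta Heta.
pose e' := eta / (2 * INR n + 1).
have He' : 0 < e' by apply: Rdiv_lt_0_compat => //; have := pos_INR n; lra.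
have Hex : forall i, exists N, forall q, leq N q ->
    Rabs (fst (u q i) - fst (d i)) <= e' /\ Rabs (snd (u q i) - snd (d i)) <= e'.
  move=> i.
  have [N1 H1] := proj2_sig (R_complete _ (Cf i)) e' He'.
  have [N2 H2] := proj2_sig (R_complete _ (Cs i)) e' He'.
  exists (maxn N1 N2) => q Hq.
  rewrite /d /=; split.
  - apply: Rlt_le; apply: H1; apply/leP; apply: leq_trans Hq; exact: leq_maxl.
  - apply: Rlt_le; apply: H2; apply/leP; apply: leq_trans Hq; exact: leq_maxr.
pose Nf i := epsilon (inhabits 0%nat) (fun N => forall q, leq N q ->
    Rabs (fst (u q i) - fst (d i)) <= e' /\ Rabs (snd (u q i) - snd (d i)) <= e').
have HNf : forall i q, leq (Nf i) q ->
    Rabs (fst (u q i) - fst (d i)) <= e' /\ Rabs (snd (u q i) - snd (d i)) <= e'.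
  move=> i; exact: (epsilon_spec (inhabits 0%nat) _ (Hex i)).
pose q := (p + \max_(i < n) Nf i)%nat.
have Hq : vnorm (vsub (u q) d) <= 2 * INR n * e'.
  apply: vnorm_coord_bound; first lra.
  move=> i; apply: HNf; rewrite /q; apply: leq_trans (leq_addl _ _).
  exact: (leq_bigmax i).
have Hpq := Hc p q (leq_addr _ _).
have := vnorm_tri (u p) (u q) d.
have : 2 * INR n * e' <= eta.
  rewrite /e'; have := pos_INR n => hn.
  apply: (Rmult_le_reg_r (2 * INR n + 1)); first lra.
  field_simplify; lra.
lra.
Qed.
End Lim.

Lemma vnorm_xx n (x : Cn n) : vnorm (vsub x x) = 0.
Proof.
rewrite /vnorm (_ : rinner (vsub x x) (vsub x x) = 0) ?sqrt_0 //.
rewrite /rinner; apply: (big_rec (fun u => u = 0)) => // i u _ ->.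
rewrite /vsub /=; ring.
Qed.

Lemma r_succ m : / 2 ^ m.+1 = / 2 ^ m / 2.
Proof. have h : 0 < 2 ^ m by apply: pow_lt; lra. rewrite [2 ^ m.+1]/=; field; lra. Qed.

Section Compl.
Variable n : nat.
Variable C : nat -> Cn n -> Prop.
Hypothesis sph : forall k a, C k a -> vnorm a = 1.
Hypothesis cl1 : forall k k', leq k k' -> forall a, C k a ->
  exists b, C k' b /\ vnorm (vsub a b) < / 2 ^ k.
Hypothesis cl2 : forall k k', leq k k' -> forall b, C k' b ->
  exists a, C k a /\ vnorm (vsub a b) < / 2 ^ k.

Definition Dlim (d : Cn n) := vnorm d = 1 /\ forall e, 0 < e ->
  exists K, forall k, leq K k -> exists a, C k a /\ vnorm (vsub a d) < e.

Lemma Dlim_closed : Defs.closed_set Dlim.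
Proof.
move=> x Hx; split.
  apply: eq_eps => e He.
  have [d [[Hd1 _] Hxd]] := Hx e He.
  have := norm_lip x d; rewrite Hd1; lra.
move=> e He.
have [d [[_ Hd] Hxd]] := Hx (e / 2) ltac:(lra).
have [K HK] := Hd (e / 2) ltac:(lra).
exists K => k Hk; have [a [Ha Had]] := HK k Hk.
exists a; split => //.
have := vnorm_tri a d x; rewrite (vnorm_subC d x); lra.
Qed.

Section Chain.
Variables (j : nat) (a : Cn n).
Hypothesis Ha : C j a.

Fixpoint ch (p : nat) : Cn n :=
  match p with
  | 0 => a
  | S p' => epsilon (inhabits a)
      (fun b => C (addn j p'.+1) b /\ vnorm (vsub (ch p') b) < / 2 ^ (addn j p'))
  end.

Lemma ch_spec p : C (addn j p) (ch p) /\
  vnorm (vsub (ch p) (ch p.+1)) < / 2 ^ (addn j p).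
Proof.
have H : forall p0, C (addn j p0) (ch p0).
  elim=> [|p0 IH]; first by rewrite addn0.
  have [b Hb] := @cl1 _ _ (leqnSn (addn j p0)) _ IH.
  rewrite -addnS in Hb.
  exact: (proj1 (epsilon_spec (inhabits a) (fun b => C (addn j p0.+1) b /\
     vnorm (vsub (ch p0) b) < / 2 ^ (addn j p0)) (ex_intro _ b Hb))).
split; first exact: H.
have [b Hb] := @cl1 _ _ (leqnSn (addn j p)) _ (H p).
rewrite -addnS in Hb.
exact: (proj2 (epsilon_spec (inhabits a) (fun b => C (addn j p.+1) b /\
     vnorm (vsub (ch p) b) < / 2 ^ (addn j p)) (ex_intro _ b Hb))).
Qed.

Lemma ch_bound p q : vnorm (vsub (ch p) (ch (addn p q))) <=
  2 * / 2 ^ (addn j p) - 2 * / 2 ^ (addn j (addn p q)).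
Proof.
elim: q => [|q IH]; first by rewrite addn0 vnorm_xx; lra.
have [_ h] := ch_spec (addn p q).
have := vnorm_tri (ch p) (ch (addn p q)) (ch (addn p q).+1).
rewrite addnS !addnS r_succ; lra.
Qed.

Lemma ch_limit : exists d, Dlim d /\ vnorm (vsub a d) <= 2 * / 2 ^ j.
Proof.
have [d Hd] := @cn_limit n ch (fun p => 2 * / 2 ^ (addn j p))
  ltac:(move=> p q; have := ch_bound p q; have := r_pos (addn j (addn p q)); lra)
  ltac:(move=> e He; have [K HK] := r_small (ltac:(lra) : 0 < e / 2); exists K => p Hp;
        have := HK (addn j p) (leq_trans Hp (leq_addl _ _)); lra).
exists d; split; last by have := Hd 0%nat; rewrite addn0.
split.
  apply: eq_eps => e He.
  have [K HK] := r_small (ltac:(lra) : 0 < e / 2).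
  have h1 := Hd K; have h2 := HK (addn j K) (leq_addl _ _).
  have [h3 _] := ch_spec K; have h4 := sph h3.
  have := norm_lip (ch K) d; rewrite h4.
  move=> h5; rewrite Rabs_minus_sym; lra.
move=> e He.
have [K HK] := r_small (ltac:(lra) : 0 < e / 2).
exists (maxn j K) => k Hk.
exists (ch (subn k j)); split.
  have [h _] := ch_spec (subn k j); rewrite subnKC in h => //.
  apply: leq_trans Hk; exact: leq_maxl.
have h1 := Hd (subn k j).
rewrite subnKC in h1; last by apply: leq_trans Hk; exact: leq_maxl.
have := HK k (leq_trans (leq_maxr _ _) Hk); lra.
Qed.
End Chain.

Lemma Dlim_haus : hausdorff_limit C Dlim.
Proof.
move=> e He.
have [K HK] := r_small (ltac:(lra) : 0 < e / 2).
exists K => j Hj; split.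
  move=> a Ha; have [d [Hd Had]] := ch_limit Ha.
  exists d; split => //; have := HK j Hj; lra.
move=> d [_ Hd].
have [K' HK'] := Hd (e / 2) ltac:(lra).
have [a' [Ha' Had]] := HK' (maxn j K') (leq_maxr _ _).
have [a [Ha Haa]] := @cl2 _ _ (leq_maxl j K') _ Ha'.
exists a; split => //.
have := vnorm_tri a a' d; have := HK j Hj; lra.
Qed.
End Compl.

Section Final.
Variable n : nat.
Implicit Types x y : Cn n.

Lemma rscal_inv t x : t <> 0 -> rscal t (rscal (/ t) x) = x.
Proof.
move=> Ht; apply: functional_extensionality => i; rewrite /rscal /=.
case: (x i) => a b /=; f_equal; field; done.
Qed.

Lemma rscal_vsub t x y : vsub (rscal t x) (rscal t y) = rscal t (vsub x y).
Proof. apply: functional_extensionality => i; rewrite /rscal /vsub /=; f_equal; ring. Qed.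

Lemma rscal1 x : rscal 1 x = x.
Proof.
apply: functional_extensionality => i; rewrite /rscal /=.
case: (x i) => a b /=; f_equal; ring.
Qed.

Lemma key (X L : Cn n -> Prop) (pi : Cn n -> Cn n) :
  tangent_cone_at_infinity_is X L -> is_complex_subspace L -> is_orth_projection L pi ->
  forall dl, 0 < dl -> exists M, forall x, X x -> vnorm x > M ->
    vnorm (vsub x (pi x)) <= dl * vnorm x.
Proof.
move=> [_ Huniq] HL Hpi dl Hdl.
apply: NNPP => H.
have Hex : forall k : nat, exists x, X x /\ vnorm x > INR k /\ vnorm (vsub x (pi x)) > dl * vnorm x.
  move=> k; apply: NNPP => H1; apply: H; exists (INR k) => x Hx Hn.
  apply: Rnot_lt_le => H2; apply: H1; exists x; split => //; split => //; lra.
pose xs k := epsilon (inhabits (@vzero n))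
  (fun x => X x /\ vnorm x > INR k /\ vnorm (vsub x (pi x)) > dl * vnorm x).
have Hxs : forall k, X (xs k) /\ vnorm (xs k) > INR k /\
    vnorm (vsub (xs k) (pi (xs k))) > dl * vnorm (xs k).
  move=> k; exact: (epsilon_spec (inhabits (@vzero n)) _ (Hex k)).
pose t k := vnorm (xs k).
have Htpos : forall k, t k > 0.
  move=> k; have [_ [h _]] := Hxs k; have := pos_INR k; rewrite /t; lra.
pose B k := fun y => exists x, X x /\ vnorm x = t k /\ y = rscal (/ t k) x.
have HBs : forall k y, B k y -> vnorm y = 1.
  move=> k y [x [_ [Hx ->]]]; rewrite vnorm_rscal Hx Rabs_right.
    by field; have := Htpos k; lra.
  by have := Htpos k => h; apply: Rle_ge; apply: Rlt_le; apply: Rinv_0_lt_compat.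
pose C k := B (sq B k.+1).
have Cs : forall k a, C k a -> vnorm a = 1 by move=> k a; apply: HBs.
have cl1 : forall k k', leq k k' -> forall a, C k a ->
    exists b, C k' b /\ vnorm (vsub a b) < / 2 ^ k.
  move=> k k' Hk; apply: tr_close; try apply: Cs.
  exact: (@sq_tr n B k k' Hk).
have cl2 : forall k k', leq k k' -> forall b, C k' b ->
    exists a, C k a /\ vnorm (vsub a b) < / 2 ^ k.
  move=> k k' Hk b Hb.
  have [a [Ha Hab]] : exists a, C k a /\ vnorm (vsub b a) < / 2 ^ k.
    apply: tr_close; [exact: Cs | exact: Cs | exact: (esym (@sq_tr n B k k' Hk)) | exact: Hb].
  exists a; split => //; by rewrite vnorm_subC.
pose D := Dlim C.
pose E' := fun x => exists s v, s >= 0 /\ D v /\ x = rscal s v.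
have HE' : is_tangent_cone_at_infinity X E'.
  exists (fun j => t (sq B j.+1)), D.
  split; first by move=> j; apply: Htpos.
  split.
    move=> M; have [N HN] := INR_unbounded M; exists N => j Hj.
    have [_ [h _]] := Hxs (sq B j.+1).
    have h2 : leq N (sq B j.+1) by apply: leq_trans Hj (leq_trans (leqnSn j) (sq_ge B j.+1)).
    have := le_INR _ _ (elimT leP h2); rewrite /t; lra.
  split; first by move=> d [].
  split; first exact: Dlim_closed.
  split; first (apply: (@Dlim_haus n C); [exact: Cs | exact: cl1 | exact: cl2]).
  by move=> x.
have HDL : forall d, D d -> L d.
  move=> d Hd; apply/(Huniq _ HE'); exists 1, d; split; first lra.
  by rewrite rscal1.
have [J HJ] := @Dlim_haus n C Cs cl1 cl2 dl Hdl.
have [HJ1 _] := HJ J (leqnn J).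
pose k := sq B J.+1.
have Hy : C J (rscal (/ t k) (xs k)).
  by exists (xs k); split; [case: (Hxs k) | split].
have [d [Hd Hyd]] := HJ1 _ Hy.
have Hw : L (rscal (t k) d) by apply: L_rscal => //; apply: HDL.
have Hmin := @proj_min n L pi (xs k) (rscal (t k) d) HL Hpi Hw.
have Htk := Htpos k.
have Heq : vnorm (vsub (xs k) (rscal (t k) d)) = t k * vnorm (vsub (rscal (/ t k) (xs k)) d).
  rewrite -{1}(@rscal_inv (t k) (xs k)); last lra.
  rewrite rscal_vsub vnorm_rscal Rabs_right //; lra.
rewrite Heq in Hmin.
have [_ [_ Hbad]] := Hxs k.
rewrite -/(t k) in Hbad.
have : t k * vnorm (vsub (rscal (/ t k) (xs k)) d) < t k * dl.
  by apply: Rmult_lt_compat_l.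
lra.
Qed.
End Final.

Unset Implicit Arguments.

Theorem mainTheorem11 (n : nat) (X L : Cn n -> Prop) (pi : Cn n -> Cn n)
  (eps : R) (gamma : R -> Cn n) (v : Cn n) :
  is_complex_algebraic X ->
  unbounded X ->
  tangent_cone_at_infinity_is X L ->
  is_complex_subspace L ->
  is_orth_projection L pi ->
  (* gamma is an arc (continuous) on (eps, +oo) with values in X *)
  (forall t, t > eps -> forall i : 'I_n,
     continuity_pt (fun s => fst (gamma s i)) t /\
     continuity_pt (fun s => snd (gamma s i)) t) ->
  (forall t, t > eps -> X (gamma t)) ->
  (forall M, exists T, forall t, t > T -> vnorm (gamma t) > M) ->
  L v ->
  asymp_linear (fun t => pi (gamma t)) v ->
  asymp_linear gamma v.
Proof.
move=> _ _ Htc HL Hpi _ HX Hinf _ Hasy e He.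
pose V := vnorm v.
have HV : 0 <= V by apply: vnorm_ge0.
pose et := e / 2.
pose dl := Rmin (1 / 2) (e / (4 * (et + V) + 4)).
have Hdl : 0 < dl.
  apply: Rmin_pos; first lra.
  apply: Rdiv_lt_0_compat => //; rewrite /et; lra.
have Hdl1 : dl <= 1 / 2 by apply: Rmin_l.
have Hdl2 : dl * (2 * (et + V)) <= e / 2.
  have h : dl <= e / (4 * (et + V) + 4) by apply: Rmin_r.
  have h0 : 0 <= 2 * (et + V) by rewrite /et; lra.
  apply: Rle_trans (Rmult_le_compat_r _ _ _ h0 h) _.
  have hp : 0 < 4 * (et + V) + 4 by rewrite /et; lra.
  apply: (Rmult_le_reg_r (4 * (et + V) + 4)) => //.
  have -> : e / (4 * (et + V) + 4) * (2 * (et + V)) * (4 * (et + V) + 4) = e * (2 * (et + V)).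
    field; lra.
  have -> : e / 2 * (4 * (et + V) + 4) = e * (2 * (et + V)) + 2 * e by field.
  lra.
have [M HM] := key Htc HL Hpi Hdl.
have [T1 HT1] := Hasy et ltac:(rewrite /et; lra).
have [T2 HT2] := Hinf M.
exists (Rmax (Rmax T1 T2) (Rmax eps 0)) => t Ht.
have ht1 : t > T1 by have := Rmax_l T1 T2; have := Rmax_l (Rmax T1 T2) (Rmax eps 0); lra.
have ht2 : t > T2 by have := Rmax_r T1 T2; have := Rmax_l (Rmax T1 T2) (Rmax eps 0); lra.
have ht3 : t > eps by have := Rmax_l eps 0; have := Rmax_r (Rmax T1 T2) (Rmax eps 0); lra.
have ht4 : t > 0 by have := Rmax_r eps 0; have := Rmax_r (Rmax T1 T2) (Rmax eps 0); lra.
set g := gamma t.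
have hk := HM g (HX t ht3) (HT2 t ht2).
have h1 := HT1 t ht1; rewrite /= -/g in h1.
have htv : vnorm (vsub (rscal t v) (@vzero n)) = t * V.
  by rewrite vsub0 vnorm_rscal Rabs_right; [|lra].
have hg : vnorm g <= dl * vnorm g + et * t + t * V.
  have := vnorm_tri g (pi g) (@vzero n); rewrite !vsub0.
  have := vnorm_tri (pi g) (rscal t v) (@vzero n); rewrite !vsub0.
  rewrite vsub0 in htv. lra.
have hg2 : vnorm g <= 2 * t * (et + V).
  have hgn := vnorm_ge0 g.
  have : dl * vnorm g <= 1 / 2 * vnorm g by apply: Rmult_le_compat_r.
  lra.
have h3 : dl * vnorm g <= dl * (2 * t * (et + V)) by apply: Rmult_le_compat_l; lra.
have h4 : dl * (2 * t * (et + V)) <= e / 2 * t.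
  have -> : dl * (2 * t * (et + V)) = dl * (2 * (et + V)) * t by ring.
  apply: Rmult_le_compat_r; lra.
have := vnorm_tri g (pi g) (rscal t v).
rewrite /et in h1. lra.
Qed.
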